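(* Under the standing assumptions below, let $a=v+ix\in B$ with $v\in V$ and $0\le i<k$. Then: (1) $a\in Z(B,+)$ if and only if $Av=v$ and $A^i(w)=-v+w+v$ for all $w\in V$; (2) $V\cap Z(B,+)=0$; (3) $\mathrm{Soc}(B)=0$, where $\mathrm{Soc}(B)=\{b\in B:\lambda_b=\mathrm{id}\text{ and }b\in Z(B,+)\}$.
   Context: Skew left brace $(B,+,\circ)$: groups $(B,+)$, $(B,\circ)$ with $a\circ(b+c)=a\circ b-a+a\circ c$; $\lambda_a(b)=-a+a\circ b$, $\sigma_a(b)=-a+b+a$, $a*b=-a+a\circ b-b$. Ideal: normal subgroup $I$ of $(B,+)$, $\lambda_a(I)\subseteq I$ for all $a$, normal in $(B,\circ)$. $I*J$ = additive subgroup generated by $\{i*j\}$; $B^{(2)}=B*B$, $B^{(3)}=B^{(2)}*B$. Standing assumptions: $B$ is a finite skew left brace and $X\subseteq B$ with $|X|\ge3$ and $\lambda_a(X)=X$, $\sigma_a(X)=X$ for all $a\in B$; $B$ is additively generated by $X$; the ideal $V$ generated by $\{x-y:x,y\in X\}$ is the smallest non-zero ideal of $B$; $B/V$ is a trivial skew left brace with cyclic additive group; the group $\{\sigma_a\lambda_b|_X:a,b\in V\}$ acts transitively on $X$; and $B^{(3)}=0$. Fix $x\in X$ and let $k=|B/V|$; then every element of $B$ is uniquely $v+ix$ with $v\in V$, $0\le i<k$. $A\in\mathrm{Aut}(V,+)$ is $Av=x+v-x$. *)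

(* Defs.v *)
From mathcomp Require Import all_boot.
Set Implicit Arguments. Unset Strict Implicit. Unset Printing Implicit Defensive.

Record skew_brace (T : finType) := SkewBrace {
  sadd : T -> T -> T;
  szero : T;
  sopp : T -> T;
  scirc : T -> T -> T;
  sone : T;
  sinv : T -> T;
  saddA : forall a b c, sadd a (sadd b c) = sadd (sadd a b) c;
  sadd0 : forall a, sadd szero a = a;
  saddN : forall a, sadd (sopp a) a = szero;
  scircA : forall a b c, scirc a (scirc b c) = scirc (scirc a b) c;
  scirc1 : forall a, scirc sone a = a;
  scircV : forall a, scirc (sinv a) a = sone;
  sbrace : forall a b c,
    scirc a (sadd b c) = sadd (sadd (scirc a b) (sopp a)) (scirc a c)
}.

Section Defs.
Variables (T : finType) (B : skew_brace T).

Local Notation "a + b" := (sadd B a b).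
Local Notation "- a" := (sopp B a).
Local Notation "a 'o' b" := (scirc B a b) (at level 40).

Definition lam (a b : T) : T := - a + (a o b).
Definition sig (a b : T) : T := (- a + b) + a.
Definition star (a b : T) : T := (- a + (a o b)) + - b.

Definition nmul (n : nat) (x : T) : T := iter n (sadd B x) (szero B).

Definition is_addsub (H : {set T}) : bool :=
  (szero B \in H) && [forall a, forall b, ((a \in H) && (b \in H)) ==> (a + - b \in H)].

Definition addgen (S : {set T}) : {set T} :=
  \bigcap_(H : {set T} | is_addsub H && (S \subset H)) H.

Definition starset (I J : {set T}) : {set T} :=
  addgen [set star i j | i in I, j in J].

Definition B2 : {set T} := starset [set: T] [set: T].
Definition B3 : {set T} := starset B2 [set: T].

Definition is_ideal (I : {set T}) : Prop :=
  is_addsub I /\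
  (forall a y, y \in I -> (- a + y) + a \in I) /\
  (forall a y, y \in I -> lam a y \in I) /\
  (sone B \in I) /\ (forall y z, y \in I -> z \in I -> y o sinv B z \in I) /\
  (forall a y, y \in I -> (a o y) o sinv B a \in I).

Definition addcenter : {set T} := [set b | [forall c, b + c == c + b]].

Definition socle : {set T} :=
  [set b | [forall c, lam b c == c] && (b \in addcenter)].

End Defs.

(* Main.v *)
Require Import Defs.
From mathcomp Require Import all_boot.
Set Implicit Arguments. Unset Strict Implicit. Unset Printing Implicit Defensive.

Section Grp.
Variables (T : finType) (B : skew_brace T).
Local Infix "\+" := (sadd B) (at level 50, left associativity).
Local Notation "\- a" := (sopp B a) (at level 35, right associativity).
Local Infix "\c" := (scirc B) (at level 40, left associativity).
Local Notation "0" := (szero B).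
Local Notation "1" := (sone B).

Lemma addA a b c : a \+ (b \+ c) = a \+ b \+ c. Proof. exact: saddA. Qed.
Lemma add0 a : 0 \+ a = a. Proof. exact: sadd0. Qed.
Lemma addNr a : \- a \+ a = 0. Proof. exact: saddN. Qed.
Lemma addrN a : a \+ \- a = 0.
Proof.
have e : a \+ \- a = \- \- a \+ \- a \+ (a \+ \- a) by rewrite addNr add0.
by rewrite e -addA (addA (\- a)) addNr add0 addNr.
Qed.
Lemma addr0 a : a \+ 0 = a.
Proof. by rewrite -(addNr a) addA addrN add0. Qed.
Lemma addKr a b : \- a \+ (a \+ b) = b. Proof. by rewrite addA addNr add0. Qed.
Lemma addNKr a b : a \+ (\- a \+ b) = b. Proof. by rewrite addA addrN add0. Qed.
Lemma addrK a b : b \+ a \+ \- a = b. Proof. by rewrite -addA addrN addr0. Qed.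
Lemma addrNK a b : b \+ \- a \+ a = b. Proof. by rewrite -addA addNr addr0. Qed.
Lemma addIr a b c : a \+ b = a \+ c -> b = c.
Proof. by move=> h; rewrite -(addKr a b) h addKr. Qed.
Lemma addrI a b c : b \+ a = c \+ a -> b = c.
Proof. by move=> h; rewrite -(addrK a b) h addrK. Qed.
Lemma oppU a b : a \+ b = 0 -> b = \- a.
Proof. by move=> h; apply: (@addIr a); rewrite h addrN. Qed.
Lemma oppK a : \- \- a = a.
Proof. by symmetry; apply: oppU; rewrite addNr. Qed.
Lemma oppD a b : \- (a \+ b) = \- b \+ \- a.
Proof. by symmetry; apply: oppU; rewrite addA addrK addrN. Qed.
Lemma opp0 : \- 0 = 0.
Proof. by symmetry; apply: oppU; rewrite addr0. Qed.

Lemma circA a b c : a \c (b \c c) = a \c b \c c. Proof. exact: scircA. Qed.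
Lemma circ1 a : 1 \c a = a. Proof. exact: scirc1. Qed.
Lemma circVr a : sinv B a \c a = 1. Proof. exact: scircV. Qed.
Lemma circrV a : a \c sinv B a = 1.
Proof.
have e : a \c sinv B a = sinv B (sinv B a) \c sinv B a \c (a \c sinv B a) by rewrite circVr circ1.
by rewrite e -circA (circA (sinv B a)) circVr circ1 circVr.
Qed.
Lemma circr1 a : a \c 1 = a.
Proof. by rewrite -(circVr a) circA circrV circ1. Qed.

Lemma circ0 a : a \c 0 = a.
Proof.
have h := sbrace B a 0 0; rewrite add0 -addA in h.
have := f_equal (fun t => \- (a \c 0) \+ t) h.
by rewrite addNr addKr => /esym/(f_equal (fun t => a \+ t)); rewrite addNKr addr0.
Qed.
Lemma one0 : 1 = 0.
Proof. by rewrite -(circ0 1) circ1. Qed.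

Lemma circ_lam a b : a \c b = a \+ lam B a b.
Proof. by rewrite /lam addNKr. Qed.
Lemma lam_add a b c : lam B a (b \+ c) = lam B a b \+ lam B a c.
Proof. by rewrite /lam sbrace -!addA. Qed.
Lemma lam0 a : lam B a 0 = 0.
Proof. by rewrite /lam circ0 addNr. Qed.
Lemma lam_opp a b : lam B a (\- b) = \- lam B a b.
Proof. by apply: oppU; rewrite -lam_add addrN lam0. Qed.
Lemma lam_circ a b c : lam B (a \c b) c = lam B a (lam B b c).
Proof.
rewrite {1}/lam -circA (circ_lam b c) sbrace.
by rewrite -addA addKr.
Qed.
Lemma lam1 c : lam B 1 c = c.
Proof. by rewrite /lam circ1 one0 opp0 add0. Qed.
Lemma lamK a c : lam B a (lam B (sinv B a) c) = c.
Proof. by rewrite -lam_circ circrV lam1. Qed.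
Lemma lamKV a c : lam B (sinv B a) (lam B a c) = c.
Proof. by rewrite -lam_circ circVr lam1. Qed.
End Grp.
Arguments addA {T B}.
Arguments add0 {T B}.
Arguments addNr {T B}.
Arguments addrN {T B}.
Arguments addr0 {T B}.
Arguments addKr {T B}.
Arguments addNKr {T B}.
Arguments addrK {T B}.
Arguments addrNK {T B}.
Arguments addIr {T B}.
Arguments addrI {T B}.
Arguments oppU {T B}.
Arguments oppK {T B}.
Arguments oppD {T B}.
Arguments opp0 {T B}.
Arguments circA {T B}.
Arguments circ1 {T B}.
Arguments circVr {T B}.
Arguments circrV {T B}.
Arguments circr1 {T B}.
Arguments circ0 {T B}.
Arguments one0 {T B}.
Arguments circ_lam {T B}.
Arguments lam_add {T B}.
Arguments lam0 {T B}.
Arguments lam_opp {T B}.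
Arguments lam_circ {T B}.
Arguments lam1 {T B}.
Arguments lamK {T B}.
Arguments lamKV {T B}.
Set Implicit Arguments. Unset Strict Implicit. Unset Printing Implicit Defensive.

Section Sub.
Variables (T : finType) (B : skew_brace T).
Local Infix "\+" := (sadd B) (at level 50, left associativity).
Local Notation "\- a" := (sopp B a) (at level 35, right associativity).
Local Infix "\c" := (scirc B) (at level 40, left associativity).
Local Notation "0" := (szero B).
Local Notation "1" := (sone B).

Lemma addsubP (H : {set T}) :
  is_addsub B H <-> (0 \in H /\ forall a b, a \in H -> b \in H -> a \+ \- b \in H).
Proof.
split.
  case/andP=> h0 /forallP h; split=> // a b ha hb.
  by have /forallP/(_ b)/implyP := h a; apply; rewrite ha hb.
case=> h0 h; apply/andP; split=> //; apply/forallP=> a; apply/forallP=> b.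
by apply/implyP=> /andP[]; apply: h.
Qed.

Lemma addsub_opp (H : {set T}) b : is_addsub B H -> b \in H -> \- b \in H.
Proof. by case/addsubP=> h0 h hb; rewrite -[\- b](@add0 _ B); apply: h. Qed.
Lemma addsub_add (H : {set T}) a b : is_addsub B H -> a \in H -> b \in H -> a \+ b \in H.
Proof.
move=> hH ha hb; rewrite -[b](@oppK _ B); case/addsubP: (hH) => _ h; apply: h => //; exact: addsub_opp.
Qed.
Lemma addsub0 (H : {set T}) : is_addsub B H -> 0 \in H.
Proof. by case/addsubP. Qed.

Lemma addgen_sub (S : {set T}) : S \subset addgen B S.
Proof. by apply/bigcapsP=> H /andP[]. Qed.
Lemma addgen_min (S H : {set T}) : is_addsub B H -> S \subset H -> addgen B S \subset H.
Proof. by move=> h1 h2; apply: bigcap_inf; rewrite h1 h2. Qed.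
Lemma addgen_addsub (S : {set T}) : is_addsub B (addgen B S).
Proof.
apply/addsubP; split.
  by apply/bigcapP=> H /andP[/addsub0].
move=> a b /bigcapP ha /bigcapP hb; apply/bigcapP=> H hH.
case/andP: (hH) => /addsubP[_ h] _; apply: h; [exact: ha | exact: hb].
Qed.

Lemma addgen_ind (S : {set T}) (P : pred T) :
  P 0 -> (forall a b, P a -> P b -> P (a \+ \- b)) -> (forall s, s \in S -> P s) ->
  forall y, y \in addgen B S -> P y.
Proof.
move=> h0 hs hS y hy.
have sub : addgen B S \subset [set y | P y].
  apply: addgen_min.
    apply/addsubP; split; first by rewrite inE.
    by move=> a b; rewrite !inE => ha hb; apply: hs.
  by apply/subsetP=> s hs'; rewrite inE; apply: hS.
by have := subsetP sub y hy; rewrite inE.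
Qed.
End Sub.
Set Implicit Arguments. Unset Strict Implicit. Unset Printing Implicit Defensive.

Section Id.
Variables (T : finType) (B : skew_brace T).
Local Infix "\+" := (sadd B) (at level 50, left associativity).
Local Notation "\- a" := (sopp B a) (at level 35, right associativity).
Local Infix "\c" := (scirc B) (at level 40, left associativity).
Local Notation "0" := (szero B).
Local Notation "1" := (sone B).

Lemma starE a b : star B a b = lam B a b \+ \- b. Proof. by []. Qed.
Lemma lam_star a b : lam B a b = star B a b \+ b. Proof. by rewrite starE addrNK. Qed.

Lemma star_in (U : {set T}) a b : a \in U -> star B a b \in starset B U [set: T].
Proof.
move=> ha; apply: (subsetP (addgen_sub _ _)); apply/imset2P; exists a b => //.
Qed.

Lemma B2_lam c y : y \in B2 B -> lam B c y \in B2 B.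
Proof.
move=> hy.
suff : [forall c, lam B c y \in B2 B] by move/forallP.
move: y hy; apply: addgen_ind.
- by apply/forallP=> c'; rewrite lam0; apply: addsub0; apply: addgen_addsub.
- move=> a b /forallP ha /forallP hb; apply/forallP=> c'.
  rewrite lam_add lam_opp; apply: addsub_add; [exact: addgen_addsub| exact: ha|].
  by apply: addsub_opp; [exact: addgen_addsub| exact: hb].
- move=> s /imset2P[a b _ _ ->]; apply/forallP=> c'.
  have -> : lam B c' (star B a b) = star B (c' \c a) b \+ \- star B c' b.
    rewrite !starE lam_add lam_opp lam_circ !oppD !oppK !addA.
    by rewrite addrNK.
  apply: addsub_add; [exact: addgen_addsub| exact: star_in|].
  by apply: addsub_opp; [exact: addgen_addsub| exact: star_in].
Qed.

Lemma conj_sub c a b : \- c \+ (a \+ \- b) \+ c = (\- c \+ a \+ c) \+ \- (\- c \+ b \+ c).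
Proof. by rewrite !oppD !oppK !addA addrK. Qed.

Lemma B2_conj c y : y \in B2 B -> \- c \+ y \+ c \in B2 B.
Proof.
move=> hy.
suff : [forall c, \- c \+ y \+ c \in B2 B] by move/forallP.
move: y hy; apply: addgen_ind.
- by apply/forallP=> c'; rewrite addr0 addNr; apply: addsub0; apply: addgen_addsub.
- move=> a b /forallP ha /forallP hb; apply/forallP=> c'.
  rewrite conj_sub; apply: addsub_add; [exact: addgen_addsub| exact: ha|].
  by apply: addsub_opp; [exact: addgen_addsub| exact: hb].
- move=> s /imset2P[a b _ _ ->]; apply/forallP=> c'.
  have [d hd] : exists d, lam B a d = \- c' by exists (lam B (sinv B a) (\- c')); rewrite lamK.
  have -> : \- c' \+ star B a b \+ c' = star B a (d \+ b) \+ \- star B a d.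
    rewrite !starE lam_add hd !oppD !oppK !addA.
    by rewrite addrNK.
  apply: addsub_add; [exact: addgen_addsub| exact: star_in|].
  by apply: addsub_opp; [exact: addgen_addsub| exact: star_in].
Qed.

Lemma inv_lam z : sinv B z = lam B (sinv B z) (\- z).
Proof.
have e : lam B z (sinv B z) = \- z by rewrite /lam circrV one0 addr0.
by rewrite -e lamKV.
Qed.

Lemma circ_conj a y : a \c y \c sinv B a = a \+ lam B a (y \+ star B y (sinv B a)) \+ \- a.
Proof.
by rewrite -circA (circ_lam y) (lam_star y) addA sbrace circrV one0 addr0 (circ_lam a).
Qed.

Lemma B2_ideal : is_ideal B (B2 B).
Proof.
have hs := addgen_addsub B [set star B i j | i in [set: T], j in [set: T]].
have hs' : is_addsub B (B2 B) by exact: hs.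
split; first exact: hs'.
split; first by move=> a y; apply: B2_conj.
split; first by move=> a y; apply: B2_lam.
split; first by rewrite one0; apply: addsub0.
split.
  move=> y z hy hz; rewrite circ_lam lam_star addA.
  apply: addsub_add => //; first apply: addsub_add => //.
    by apply: star_in.
  by rewrite inv_lam; apply: B2_lam; apply: addsub_opp.
move=> a y hy; rewrite circ_conj.
have := B2_conj (\- a) (B2_lam a (_ : y \+ star B y (sinv B a) \in B2 B)).
rewrite oppK; apply.
by apply: addsub_add => //; apply: star_in.
Qed.
End Id.
Set Implicit Arguments. Unset Strict Implicit. Unset Printing Implicit Defensive.

Section Cent.
Variables (T : finType) (B : skew_brace T).
Local Infix "\+" := (sadd B) (at level 50, left associativity).
Local Notation "\- a" := (sopp B a) (at level 35, right associativity).
Local Infix "\c" := (scirc B) (at level 40, left associativity).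
Local Notation "0" := (szero B).
Local Notation "1" := (sone B).

Lemma centP b : b \in addcenter B <-> forall c, b \+ c = c \+ b.
Proof.
rewrite inE; split; first by move/forallP=> h c; apply/eqP.
by move=> h; apply/forallP=> c; apply/eqP.
Qed.

Lemma comm_opp a b : a \+ b = b \+ a -> a \+ \- b = \- b \+ a.
Proof.
move=> h; apply: (@addrI _ B b); by rewrite addrNK -addA h addKr.
Qed.

Lemma cent0 : 0 \in addcenter B.
Proof. by apply/centP=> c; rewrite add0 addr0. Qed.
Lemma cent_sub a b : a \in addcenter B -> b \in addcenter B -> a \+ \- b \in addcenter B.
Proof.
move=> /centP ha /centP hb; apply/centP=> c.
by rewrite -addA -(comm_opp (esym (hb c))) addA ha -addA.
Qed.
Lemma cent_lam a b : b \in addcenter B -> lam B a b \in addcenter B.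
Proof.
move=> /centP hb; apply/centP=> c.
by rewrite -(@lamK _ B a c) -!lam_add hb.
Qed.
Lemma cent_conj a y : y \in addcenter B -> \- a \+ y \+ a = y.
Proof. by move=> /centP h; rewrite -addA h addKr. Qed.

Definition isoc b := [forall c, lam B b c == c].
Lemma socP b : b \in socle B <-> (forall c, lam B b c = c) /\ b \in addcenter B.
Proof.
rewrite inE; split.
  by case/andP=> /forallP h ->; split=> // c; apply/eqP.
by case=> h ->; rewrite andbT; apply/forallP=> c; apply/eqP.
Qed.

Lemma lam0id c : lam B 0 c = c.
Proof. by rewrite -{1}one0 lam1. Qed.

Lemma inv_triv b : (forall c, lam B (sinv B b) c = c) -> sinv B b = \- b.
Proof.
move=> h; apply: (@addrI _ B b); rewrite addNr.
have e := @circ_lam _ B (sinv B b) b; rewrite h in e.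
by rewrite -e circVr one0.
Qed.

Lemma soc_inv b : b \in socle B -> sinv B b \in socle B /\ sinv B b = \- b.
Proof.
case/socP=> hl hc.
have hl' : forall c, lam B (sinv B b) c = c.
  by move=> c; rewrite -{1}(hl c) lamKV.
have e := inv_triv hl'.
split=> //; apply/socP; split=> //; rewrite e -[\- b](@add0 _ B).
by apply: cent_sub => //; apply: cent0.
Qed.

Lemma soc_circ a b : a \in socle B -> b \in socle B -> a \c b \in socle B /\ a \c b = a \+ b.
Proof.
case/socP=> ha hca /socP[hb hcb].
have e : a \c b = a \+ b by rewrite circ_lam ha.
split=> //; apply/socP; split.
  by move=> c; rewrite lam_circ hb ha.
rewrite e -[b](@oppK _ B); apply: cent_sub => //.
by rewrite -[\- b](@add0 _ B); apply: cent_sub => //; apply: cent0.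
Qed.

Lemma soc_conj a y : y \in socle B -> a \c y \c sinv B a = lam B a y.
Proof.
case/socP=> hl hc; rewrite circ_conj starE hl addrN addr0.
by move/centP: (cent_lam a hc) => h; rewrite -(h a) addrK.
Qed.

Lemma soc_lam a y : y \in socle B -> lam B a y \in socle B.
Proof.
move=> hy; apply/socP; split; last by case/socP: hy => _ /(cent_lam a).
move=> c; rewrite -(soc_conj a hy) !lam_circ.
by case/socP: hy => -> _; rewrite lamK.
Qed.

Lemma soc_ideal : is_ideal B (socle B).
Proof.
have h0 : 0 \in socle B by apply/socP; split; [exact: lam0id | exact: cent0].
have h5 : forall y z, y \in socle B -> z \in socle B -> y \c sinv B z \in socle B.
  move=> y z hy hz; have [hz' _] := soc_inv hz; by have [] := soc_circ hy hz'.
split.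
  apply/addsubP; split=> // a b ha hb.
  have [hb' e] := soc_inv hb; have [_ e2] := soc_circ ha hb'.
  by rewrite -e -e2; apply: h5.
split; first by move=> a y hy; rewrite cent_conj //; case/socP: hy.
split; first by move=> a y; apply: soc_lam.
split; first by rewrite one0.
split; first exact: h5.
move=> a y hy; by rewrite (soc_conj a hy); exact: (soc_lam a hy).
Qed.

Section VZ.
Variable V : {set T}.
Hypothesis hV : is_ideal B V.
Hypothesis hF : forall y, y \in V -> forall c, lam B y c = c.

Lemma VZ_ideal : is_ideal B (V :&: addcenter B).
Proof.
case: hV => hVs [hVc [hVl [hV1 [hV5 hV6]]]].
have hinv : forall z, z \in V -> sinv B z = \- z.
  move=> z hz; apply: inv_triv; apply: hF.
  by rewrite -[sinv B z](@circ1 _ B); apply: hV5.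
split.
  apply/addsubP; split; first by rewrite inE cent0 andbT; apply: addsub0.
  move=> a b /setIP[ha hca] /setIP[hb hcb]; apply/setIP; split; last exact: cent_sub.
  by case/addsubP: hVs => _; apply.
split; first by move=> a y hy; rewrite cent_conj //; case/setIP: hy.
split.
  by move=> a y /setIP[hy hc]; apply/setIP; split; [apply: hVl | apply: cent_lam].
split; first by rewrite one0 inE cent0 andbT; apply: addsub0.
split.
  move=> y z /setIP[hy hcy] /setIP[hz hcz]; apply/setIP; split; first exact: hV5.
  by rewrite circ_lam hF // hinv //; apply: cent_sub.
move=> a y /setIP[hy hc]; apply/setIP; split; first exact: hV6.
have hly : lam B a y \in V by apply: hVl.
have e : a \c y = lam B a y \c a.
  rewrite (circ_lam a y) [RHS]circ_lam (hF hly a).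
  by move/centP: (cent_lam a hc) => h; rewrite (h a).
by rewrite e -circA circrV circr1; apply: cent_lam.
Qed.
End VZ.
End Cent.
Set Implicit Arguments. Unset Strict Implicit. Unset Printing Implicit Defensive.

Section Nm.
Variables (T : finType) (B : skew_brace T).
Local Infix "\+" := (sadd B) (at level 50, left associativity).
Local Notation "\- a" := (sopp B a) (at level 35, right associativity).
Local Notation "0" := (szero B).

Lemma nmul_comm x i : x \+ nmul B i x = nmul B i x \+ x.
Proof.
elim: i => [|i IH]; first by rewrite /= add0 addr0.
by rewrite [nmul B i.+1 x]/= -addA -IH.
Qed.

Lemma iterA x i w :
  iter i (fun w => x \+ w \+ \- x) w = nmul B i x \+ w \+ \- nmul B i x.
Proof.
elim: i => [|i IH]; first by rewrite /= add0 opp0 addr0.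
by rewrite iterS IH [nmul B i.+1 x]/= oppD !addA.
Qed.

Lemma comm_add a c d : a \+ c = c \+ a -> a \+ d = d \+ a -> a \+ (c \+ d) = c \+ d \+ a.
Proof. by move=> h1 h2; rewrite addA h1 -addA h2 addA. Qed.
End Nm.
Theorem lemma5p5 (T : finType) (B : skew_brace T) (X V : {set T}) (x : T) :
  (* |X| >= 3, X invariant under all lambda_a and sigma_a *)
  3 <= #|X| ->
  (forall a, [set lam B a y | y in X] = X) ->
  (forall a, [set sig B a y | y in X] = X) ->
  (* B is additively generated by X *)
  addgen B X = [set: T] ->
  (* V is the ideal generated by { x - y : x, y in X } *)
  is_ideal B V ->
  [set sadd B y (sopp B z) | y in X, z in X] \subset V ->
  (forall I, is_ideal B I ->
     [set sadd B y (sopp B z) | y in X, z in X] \subset I -> V \subset I) ->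
  (* V is the smallest non-zero ideal *)
  V != [set szero B] ->
  (forall I, is_ideal B I -> I != [set szero B] -> V \subset I) ->
  (* B/V is a trivial skew brace: a o b = a + b mod V *)
  (forall a b, sadd B (sopp B (sadd B a b)) (scirc B a b) \in V) ->
  (* (B/V,+) is cyclic *)
  (exists g, forall b, exists n, sadd B (sopp B (nmul B n g)) b \in V) ->
  (* the group generated by { sigma_a lambda_b |_X : a, b in V } is
     transitive on X *)
  (forall y z, y \in X -> z \in X ->
     exists s : seq (T * T),
       all (fun p => (p.1 \in V) && (p.2 \in V)) s /\
       foldr (fun p w => sig B p.1 (lam B p.2 w)) y s = z) ->
  (* B^(3) = 0 *)
  B3 B = [set szero B] ->
  (* fixed x in X, k = |B/V|, A v = x + v - x *)
  x \in X ->
  let k := #|T| %/ #|V| in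
  let A := fun w => sadd B (sadd B x w) (sopp B x) in
  (forall v i, v \in V -> i < k ->
     let a := sadd B v (nmul B i x) in
     a \in addcenter B <->
     (A v = v /\
      forall w, w \in V -> iter i A w = sadd B (sadd B (sopp B v) w) v)) /\
  V :&: addcenter B = [set szero B] /\
  socle B = [set szero B].
Proof.
move=> hX3 hlamX hsigX hgen hV hXV hVgen hV0 hmin htriv hcyc htrans hB3 hx k A.
have hVs : is_addsub B V by case: hV.
have hF : forall y, y \in V -> forall c, lam B y c = c.
  move=> y hy c; case: (eqVneq (B2 B) [set szero B]) => h2.
    have hs : star B y c \in B2 B := star_in B c (in_setT y).
    by move: hs; rewrite h2 in_set1 => /eqP e; rewrite lam_star e add0.
  have hyB2 := subsetP (hmin _ (B2_ideal B) h2) y hy.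
  have hs : star B y c \in B3 B := star_in B c hyB2.
  by move: hs; rewrite hB3 in_set1 => /eqP e; rewrite lam_star e add0.
have hVZ : V :&: addcenter B = [set szero B].
  apply/setP=> y; rewrite in_set1; apply/idP/idP; last first.
    by move/eqP->; rewrite inE cent0 andbT addsub0.
  move=> hy; apply/negPn/negP=> hy0.
  have hne : V :&: addcenter B != [set szero B].
    by apply/negP=> /eqP e; rewrite e in_set1 in hy; rewrite hy in hy0.
  have hsub := hmin _ (VZ_ideal hV hF) hne.
  have hcent : forall p, p \in V -> p \in addcenter B.
    by move=> p hp; have /setIP[] := subsetP hsub p hp.
  have hall : forall y z, y \in X -> z \in X -> y = z.
    move=> y0 z0 hy0' hz0; have [s [hs <-]] := htrans y0 z0 hy0' hz0.
    elim: s hs => [|p s IH] //= /andP[/andP[hp1 hp2] hs].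
    have /centP hp := hcent _ hp1.
    by rewrite -IH // (hF _ hp2) /sig -addA -(hp y0) addKr.
  have : #|X| <= 1.
    rewrite -(cards1 x); apply: subset_leq_card; apply/subsetP=> z hz.
    by rewrite in_set1 (hall z x hz hx).
  by case: #|X| hX3 => [|[|n]].
split; last split => //.
- move=> v i hv hi /=.
  set n := nmul B i x.
  have hxv : forall w, w \in V -> sadd B x w = sadd B w x -> True by [].
  split.
    move/centP=> hc; split.
      have e := hc x; rewrite -addA -nmul_comm -/n !addA in e.
      have e2 := @addrI _ B _ _ _ e.
      by rewrite /A -e2 addrK.
    move=> w hw; rewrite /A iterA -/n.
    apply: (@addrI _ B n); rewrite addrNK.
    by rewrite -[sadd B n w](@addKr _ B v) (addA v n w) (hc w) !addA.
  move=> [hA hw]; apply/centP=> c.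
  have hc : c \in addgen B X by rewrite hgen inE.
  apply/eqP; move: c hc; apply: addgen_ind.
  + by rewrite add0 addr0.
  + move=> c d /eqP h1 /eqP h2; apply/eqP; apply: comm_add => //.
    exact: comm_opp.
  + move=> s hs; apply/eqP.
    have hwV : sadd B s (sopp B x) \in V.
      by apply: (subsetP hXV); apply/imset2P; exists s x.
    have hax : sadd B (sadd B v n) x = sadd B x (sadd B v n).
      have e : sadd B x v = sadd B v x by rewrite -[in RHS]hA /A addrNK.
      by rewrite -addA -nmul_comm -/n !addA e.
    have haw : forall w, w \in V -> sadd B (sadd B v n) w = sadd B w (sadd B v n).
      move=> w hw'; have e := hw w hw'; rewrite iterA -/n in e.
      have e2 : sadd B n w = sadd B (sadd B (sadd B (sopp B v) w) v) n.
        by rewrite -e addrNK.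
      by rewrite -addA e2 !addA addrN add0.
    rewrite -[s](@addrNK _ B x); apply: comm_add => //; exact: haw.
- apply/setP=> y; rewrite in_set1; apply/idP/idP; last first.
    by move/eqP->; apply/socP; split; [exact: lam0id | exact: cent0].
  move=> hy; apply/negPn/negP=> hy0.
  have hne : socle B != [set szero B].
    by apply/negP=> /eqP e; rewrite e in_set1 in hy; rewrite hy in hy0.
  have hsub := hmin _ (soc_ideal B) hne.
  have : V \subset [set szero B].
    rewrite -hVZ; apply/subsetP=> p hp; rewrite inE hp /=.
    by have /socP[] := subsetP hsub p hp.
  move=> hV0'; move/negP: hV0; apply; rewrite eqEsubset hV0' sub1set.
  exact: addsub0.
Qed.
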